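(* Let $n\ge 2$ and let $X^n=\{x_1,\dots,x_n\}$ be the fence of $n$ points, i.e. the poset whose strict order relations are exactly $x_i<x_{i+1}$ for odd $i$ and $x_i>x_{i+1}$ for even $i$ ($1\le i\le n-1$), so $x_1<x_2>x_3<x_4>\cdots$. Then $\det(X^n_M-\lambda I)=(-1)^n\lambda(\lambda-(n-2))(\lambda+1)^{n-2}$.
   Context: For a finite poset $X=\{x_1,\dots,x_n\}$, $X_M=(x_{i,j})$ is the $n\times n$ matrix with $x_{i,j}=0$ if $x_i\le x_j$ and $x_{i,j}=1$ otherwise. The characteristic polynomial is taken as $p_X(\lambda)=\det(X_M-\lambda I)$. *)

(* Defs.v *)
From mathcomp Require Import all_boot all_order all_algebra.
Set Implicit Arguments. Unset Strict Implicit. Unset Printing Implicit Defensive.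
Import GRing.Theory.
Local Open Scope ring_scope.

Definition poset_matrix (R : nzRingType) n (le : rel 'I_n) : 'M[R]_n :=
  \matrix_(i, j) (if le i j then 0 else 1).

(* The fence on n points, 0-indexed: x_i (0-based) corresponds to x_{i+1} in the
   paper.  Strict relations: x_k < x_{k+1} for odd 1-based k, x_k > x_{k+1} for even
   1-based k, i.e. the upper element of each adjacent pair is the one with odd
   0-based index.  Since the fence has height 2, x_i <= x_j iff i = j or
   (i, j adjacent and j has odd 0-based index). *)
Definition fence_le n : rel 'I_n :=
  fun i j => (i == j) || (odd (val j) && (((val i).+1 == val j) || ((val j).+1 == val i))).

(* Main.v *)
Require Import Defs.
From mathcomp Require Import all_boot all_order all_algebra zify ring.
Import GRing.Theory.
Local Open Scope ring_scope.

Definition bn (i j : nat) : bool := odd j && ((i.+1 == j) || (j.+1 == i)).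

Lemma bn_diag i : bn i i = false.
Proof. by rewrite /bn; case: (odd i); rewrite //= !(gtn_eqF (ltnSn i)). Qed.

Lemma sum_row n : (\sum_(0 <= k < n) bn n k = odd n.-1)%N.
Proof.
case: n => [|m]; first by rewrite big_geq.
rewrite big_nat_recr //= big1_seq => [|k]; last first.
  rewrite mem_index_iota => /andP[_ km]; rewrite /bn.
  by apply/eqP; rewrite eqb0; apply/negP => /andP[_ /orP[]/eqP]; lia.
by rewrite /bn eqxx orbT andbT.
Qed.

Lemma sum_col n : (\sum_(0 <= j < n) bn j n = odd n && (n != 0))%N.
Proof.
case: n => [|m]; first by rewrite big_geq.
rewrite big_nat_recr //= big1_seq => [|k]; last first.
  rewrite mem_index_iota => /andP[_ km]; rewrite /bn.
  by apply/eqP; rewrite eqb0; apply/negP => /andP[_ /orP[]/eqP]; lia.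
by rewrite /bn eqxx /= andbT.
Qed.

Lemma sum_all n : (\sum_(0 <= k < n) \sum_(0 <= j < n) bn j k = n.-1)%N.
Proof.
elim: n => [|n IH]; first by rewrite big_geq.
rewrite big_nat_recr //= big_nat_recr //= bn_diag addn0.
rewrite (eq_bigr (fun k => \sum_(0 <= j < n) bn j k + bn n k)%N); last first.
  by move=> k _; rewrite big_nat_recr.
rewrite big_split /= IH sum_row sum_col.
case: n {IH} => [|m] //=; rewrite addnAC addnC; case: (odd m) => /=; lia.
Qed.

Definition ln (i j : nat) : bool := odd j && (i == j.+1).
Definition un (i j : nat) : bool := odd j && (i.+1 == j).

Lemma bn_nn i k j : bn i j -> bn j k = false.
Proof.
move=> /andP[oj _]; rewrite /bn; case: (odd k) / idP => //= ok.
by apply/negbTE/negP => /orP[]/eqP/(congr1 odd); rewrite /= ?oj ?ok.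
Qed.

Lemma ln_un i j k : ln i j -> un j k = false.
Proof.
move=> /andP[oj _]; rewrite /un; case: (odd k) / idP => //= ok.
by apply/negbTE/negP => /eqP/(congr1 odd); rewrite /= ?oj ?ok.
Qed.

Lemma bn_lu i j : bn i j = ln i j || un i j.
Proof. by rewrite /bn /ln /un -andb_orr orbC eq_sym. Qed.

Lemma ln_un_excl i j : ln i j -> un i j = false.
Proof. by rewrite /ln /un => /andP[_ /eqP ->]; rewrite andbC; case: eqP => //; lia. Qed.

Section Mx.
Variable R : idomainType.
Variable n : nat.

Definition Bm : 'M[R]_n := \matrix_(i, j) (bn i j)%:R.
Definition Lm : 'M[R]_n := \matrix_(i, j) (ln i j)%:R.
Definition Um : 'M[R]_n := \matrix_(i, j) (un i j)%:R.

Lemma BmBm : Bm *m Bm = 0.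
Proof.
apply/matrixP => i k; rewrite !mxE; apply: big1 => j _; rewrite !mxE.
by case h: (bn i j); rewrite ?mul0r // (bn_nn _ k _ h) mulr0.
Qed.

Lemma LmUm : Lm *m Um = 0.
Proof.
apply/matrixP => i k; rewrite !mxE; apply: big1 => j _; rewrite !mxE.
by case h: (ln i j); rewrite ?mul0r // (ln_un _ _ k h) mulr0.
Qed.

Lemma Bm_LU : Bm = Lm + Um.
Proof.
apply/matrixP => i j; rewrite !mxE bn_lu.
case h: (ln i j); by rewrite ?(ln_un_excl _ _ h) //= ?addr0 ?add0r.
Qed.

Lemma det_Q (mu : R) : mu != 0 -> \det (mu%:M - Bm) = mu ^+ n.
Proof.
move=> mu0.
have E : (mu%:M - Lm) *m (mu%:M - Um) = mu *: (mu%:M - Bm).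
  rewrite mulmxBl !mulmxBr LmUm subr0 -scalar_mxM mul_scalar_mx mul_mx_scalar.
  rewrite Bm_LU scalerBr scalerDr scale_scalar_mx opprD addrA.
  by rewrite [RHS]addrAC.
have dL : \det (mu%:M - Lm) = mu ^+ n.
  rewrite det_trig; last first.
    apply/is_trig_mxP => i j lij; rewrite !mxE /ln.
    rewrite (_ : (i == j) = false); last by apply/negbTE; rewrite neq_ltn lij.
    rewrite (_ : (i == j.+1 :> nat) = false); last by apply/negbTE/eqP; lia.
    by rewrite andbF subr0.
  rewrite (eq_bigr (fun=> mu)) ?prodr_const ?card_ord // => i _; rewrite !mxE eqxx mulr1n /ln.
  by rewrite ltn_eqF // andbF subr0.
have dU : \det (mu%:M - Um) = mu ^+ n.
  rewrite -det_tr det_trig; last first.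
    apply/is_trig_mxP => i j lij; rewrite !mxE /un.
    rewrite (_ : (j == i) = false); last by apply/negbTE; rewrite neq_ltn lij orbT.
    rewrite (_ : (j.+1 == i :> nat) = false); last by apply/negbTE/eqP; lia.
    by rewrite andbF subr0.
  rewrite (eq_bigr (fun=> mu)) ?prodr_const ?card_ord // => i _; rewrite !mxE eqxx mulr1n /un.
  by rewrite gtn_eqF // andbF subr0.
have := congr1 determinant E; rewrite det_mulmx detZ dL dU.
by move=> h; apply: (mulfI (expf_neq0 n mu0)); rewrite -h.
Qed.


Lemma detK (mu : R) : mu != 0 ->
  mu ^+ 2 * \det (mu%:M + Bm - const_mx 1) * mu ^+ n
  = (mu ^+ 2 - (mu *+ n - (n.-1)%:R)) * (mu ^+ 2) ^+ n.
Proof.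
move=> mu0.
set C := mu%:M + Bm; set Q := mu%:M - Bm.
set u : 'M[R]_(n,1) := const_mx 1; set v : 'M[R]_(1,n) := const_mx 1.
set K := block_mx (1%:M : 'M_1) v u C.
have uv : u *m v = const_mx 1.
  by apply/matrixP => i j; rewrite !mxE big_ord1 !mxE mul1r.
have CQ : C *m Q = (mu ^+ 2)%:M.
  rewrite /C /Q mulmxDl !mulmxBr BmBm subr0 -scalar_mxM mul_scalar_mx mul_mx_scalar.
  by rewrite subrK expr2.
have dK : \det K = \det (C - const_mx 1).
  have E1 : block_mx 1%:M 0 (-u) 1%:M *m K = block_mx 1%:M v 0 (C - u *m v).
    rewrite mulmx_block !mul1mx !mul0mx !addr0 mulNmx mulmx1 addNr.
    by rewrite addrC mulNmx.
  have := congr1 determinant E1.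
  by rewrite det_mulmx det_lblock !det1 !mul1r det_ublock det1 mul1r uv.
have E2 : block_mx (mu^+2)%:M (- (v *m Q)) 0 1%:M *m K *m block_mx 1%:M 0 0 Q
   = block_mx ((mu^+2)%:M - v *m Q *m u) 0 u (mu^+2)%:M.
  rewrite -mulmxA [K *m _]mulmx_block mulmx_block.
  rewrite !mulmx1 !mulmx0 !mul0mx !mul1mx !addr0 !add0r CQ.
  rewrite !mul_mx_scalar scale1r mul_scalar_mx scalerN addrN mulNmx.
  by [].
have := congr1 determinant E2.
rewrite !det_mulmx det_ublock det_lblock !det1 !mulr1 !det_scalar expr1 dK.
have vQu : (v *m Q *m u) 0 0 = mu *+ n - (n.-1)%:R.
  rewrite !mxE /v /Q /u.
  transitivity (\sum_(k < n) (mu - \sum_(j < n) (bn j k)%:R)).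
    apply: eq_bigr => k _.
    rewrite !mxE mulr1.
    rewrite (eq_bigr (fun j => mu *+ (j == k) - (bn j k)%:R)) => [|j _]; last first.
      by rewrite !mxE mul1r.
    rewrite sumrB (bigD1 k) //= eqxx mulr1n big1 ?addr0 // => j /negPf ->.
    by rewrite mulr0n.
  rewrite sumrB sumr_const card_ord; congr (_ - _).
  have : (\sum_(k < n) \sum_(j < n) bn j k)%N = n.-1.
    by rewrite -sum_all big_mkord; apply: eq_bigr => k _; rewrite big_mkord.
  move <-; rewrite natr_sum; apply: eq_bigr => k _; rewrite natr_sum.
  by [].
rewrite det_Q // mul1r det_lblock det_mx11 det_scalar => ->.
by rewrite -vQu !mxE eqxx mulr1n.
Qed.

End Mx.

Theorem mainTheorem14 (n : nat) (hn : (2 <= n)%N) :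
  \det (map_mx (@polyC int) (poset_matrix int (@fence_le n)) - 'X%:M)
  = (-1) ^+ n * 'X * ('X - (n - 2)%:R%:P) * ('X + 1) ^+ (n - 2).
Proof.
case: n hn => [|[|m]] // _.
set mu : {poly int} := 'X + 1.
have mu0 : mu != 0.
  apply/eqP => h; have := congr1 (fun p : {poly int} => p`_1) h.
  by rewrite /mu coefD coefX coef1 coef0.
have eA : map_mx (@polyC int) (poset_matrix int (@fence_le m.+2)) - 'X%:M
          = - ((mu%:M + Bm _ _) - const_mx 1).
  apply/matrixP => i j; rewrite !mxE /fence_le.
  case: (i =P j) => [<-|ne].
    rewrite bn_diag /= polyC0 !mulr1n /mu; ring.
  rewrite !mulr0n /=.
  rewrite -[odd j && _]/(bn i j); case: (bn i j); rewrite /= ?polyC0 ?polyC1 ?mulr1n ?mulr0n; ring.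
rewrite eA -scaleN1r detZ.
have := detK {poly int} m.+2 mu mu0.
set D := \det _ => h.
have hD : D = mu ^+ m * (mu ^+ 2 - (mu *+ m.+2 - (m.+1)%:R)).
  apply: (mulIf (expf_neq0 (m.+4) mu0)).
  have e1 : mu ^+ m.+4 = mu ^+ 2 * mu ^+ m.+2 by rewrite -exprD; congr (_ ^+ _); lia.
  rewrite e1 mulrA (mulrC D) h.
  set S := (_ - _).
  rewrite -exprM (mulrC (mu ^+ m)) -mulrA -!exprD.
  by congr (_ * (_ ^+ _)); lia.
rewrite hD (_ : (m.+2 - 2 = m)%N); last by lia.
rewrite polyC_natr.
move: (mu ^+ m) => t; move: ((-1) ^+ m.+2) => s.
rewrite /mu; ring.
Qed.
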